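(* Run the mechanism BFM-VM described in the context with $\ell=2$ and arbitrary $B>0$, $\alpha>1$, with all sellers behaving truthfully, and let $O$ be an optimal solution of $\max\{v(S): S\subseteq\mathcal{N},\ c(S)\le B\}$. Then $$v(O)\ \le\ 2\rho_M+2\sum_{i=1}^{2}\sum_{t=1}^{M}v(S_{i,t}).$$
   Context: Setting. $\mathcal{N}$ is a finite set of $n$ sellers. The valuation $v:2^{\mathcal{N}}\to\mathbb{R}_{\ge 0}$ satisfies $v(\emptyset)=0$ and is submodular (for $X\subseteq Y\subseteq\mathcal{N}$ and $u\notin Y$, $v(u\mid Y)\le v(u\mid X)$), not necessarily monotone, where $v(S\mid T)=v(S\cup T)-v(T)$, $v(u\mid T)=v(\{u\}\mid T)$, $v(u)=v(\{u\})$. Each seller $u$ has a private cost $c(u)\ge 0$; $c(X)=\sum_{u\in X}c(u)$. $B>0$ is the budget, $[\ell]=\{1,\dots,\ell\}$. Sellers behave truthfully: a seller $u$ offered price $q$ accepts iff $c(u)\le q$. Mechanism BFM-VM (inputs $B$, $\alpha>1$, $\ell\in\{1,2\}$): 1. Offer every seller the price $B$; let $R$ be the set of sellers who accept, and set $p(u)=B$ for $u\in R$. 2. Set $t=1$, $\rho_1=\max_{u\in R}v(u)$, $S_{1,1}=\{u_0\}$ for some $u_0\in\arg\max_{u\in R}v(u)$, and (if $\ell=2$) $S_{2,1}=\emptyset$. 3. Repeat rounds: set $t\leftarrow t+1$, $\rho_t=\alpha\rho_{t-1}$, $S_{i,t}=\emptyset$ for $i\in[\ell]$. Process the sellers $u\in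 R\setminus\bigcup_{i=1}^{\ell}S_{i,t-1}$ one at a time in a fixed order. For each such $u$: pick $j\in\arg\max_{i\in[\ell]}v(u\mid S_{i,t})$ (current contents); update $p(u)\leftarrow\min\{p(u),\ v(u\mid S_{j,t})/(\rho_t/B)\}$ and offer $p(u)$ to $u$. If $u$ accepts: if $v(S_{j,t}\cup\{u\})>\rho_t$, end the round immediately; otherwise add $u$ to $S_{j,t}$. If $u$ rejects, remove $u$ from $R$. After the round, stop if $R\setminus\bigcup_{i=1}^{\ell}(S_{i,t-1}\cup S_{i,t})=\emptyset$; otherwise start another round. 4. Let $M$ be the final value of $t$. Output $S^*\in\arg\max_{A\in\{S_{i,t}: i\in[\ell],\ t\in\{M-1,M\}\}}v(A)$, paying each $u\in S^*$ its current price $p(u)$. Notation: $S_{i,t}$ denotes the contents of that candidate set at the end of round $t$; $\rho_M$ is the threshold of the last round. *)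

(* Defs.v *)
From HB Require Import structures.
From mathcomp Require Import all_boot all_order all_algebra.
Set Implicit Arguments. Unset Strict Implicit. Unset Printing Implicit Defensive.
Import Order.TTheory GRing.Theory Num.Theory.
Local Open Scope ring_scope.

Definition marg (T : finType) (R : realFieldType) (v : {set T} -> R)
  (u : T) (S : {set T}) : R := v (u |: S) - v S.

Definition submodular (T : finType) (R : realFieldType) (v : {set T} -> R) :=
  forall (X Y : {set T}) (u : T), X \subset Y -> u \notin Y ->
    marg v u Y <= marg v u X.

Definition cost (T : finType) (R : realFieldType) (c : T -> R) (X : {set T}) : R :=
  \sum_(u in X) c u.

(* A tie-breaking rule for step 3: [sel t u S1 S2 = true] means j = 1,
   [false] means j = 2; it must pick an index maximizing v(u | S_i). *)
Definition argmax_selector (T : finType) (R : realFieldType) (v : {set T} -> R)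
  (sel : nat -> T -> {set T} -> {set T} -> bool) :=
  forall t u S1 S2,
    if sel t u S1 S2 then marg v u S2 <= marg v u S1
    else marg v u S1 <= marg v u S2.

(* State of the mechanism: (R, p, S_{1,t}, S_{2,t}). *)
Definition mstate (T : finType) (R : realFieldType) :=
  ({set T} * (T -> R) * {set T} * {set T})%type.

(* Processing (part of) a round t with threshold rho over the list l of
   sellers, in order, for l = 2 candidate sets.  Sellers are truthful:
   u accepts price q iff c u <= q. *)
Fixpoint proc (T : finType) (R : realFieldType) (v : {set T} -> R) (c : T -> R)
  (B : R) (sel : nat -> T -> {set T} -> {set T} -> bool) (t : nat) (rho : R)
  (l : seq T) (st : mstate T R) : mstate T R :=
  match l with
  | [::] => st
  | u :: l' =>
    let: (Rs, p, S1, S2) := st in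
    let j1 := sel t u S1 S2 in
    let Sj := if j1 then S1 else S2 in
    let q := Num.min (p u) (marg v u Sj / (rho / B)) in
    let p' := fun w => if w == u then q else p w in
    if c u <= q then
      if rho < v (u |: Sj) then (Rs, p', S1, S2)
      else proc v c B sel t rho l'
             (Rs, p', (if j1 then u |: S1 else S1), (if j1 then S2 else u |: S2))
    else proc v c B sel t rho l' (Rs :\ u, p', S1, S2)
  end.

(* [bfm_run ... M Rs ps S1 S2 rho] : the sequences (indexed by the round t)
   describe an execution of BFM-VM with l = 2 that stops after round M.
   Rs t, ps t, S1 t, S2 t are the values at the end of round t
   (t = 1 corresponds to the state after steps 1-2). *)
Definition bfm_run (T : finType) (R : realFieldType) (v : {set T} -> R)
  (c : T -> R) (B alpha : R) (ord : seq T)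
  (sel : nat -> T -> {set T} -> {set T} -> bool) (u0 : T) (M : nat)
  (Rs : nat -> {set T}) (ps : nat -> T -> R) (S1 S2 : nat -> {set T})
  (rho : nat -> R) : Prop :=
  [/\ Rs 1%N = [set u | c u <= B], ps 1%N = (fun _ => B),
      u0 \in Rs 1%N & (forall u, u \in Rs 1%N -> v [set u] <= v [set u0])] /\
  [/\ rho 1%N = v [set u0], S1 1%N = [set u0] & S2 1%N = set0 ] /\
  [/\
      (2 <= M)%N,
      (forall t, (2 <= t <= M)%N -> rho t = alpha * rho t.-1),
      (forall t, (2 <= t <= M)%N ->
          (Rs t, ps t, S1 t, S2 t) =
          proc v c B sel t (rho t)
            [seq u <- ord | u \in Rs t.-1 :\: (S1 t.-1 :|: S2 t.-1)]
            (Rs t.-1, ps t.-1, set0, set0)),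
      (forall t, (2 <= t < M)%N ->
          Rs t :\: (S1 t.-1 :|: S2 t.-1 :|: S1 t :|: S2 t) != set0) &
      Rs M :\: (S1 M.-1 :|: S2 M.-1 :|: S1 M :|: S2 M) = set0 ].

(* Main.v *)
Require Import Defs.
From HB Require Import structures.
From mathcomp Require Import all_boot all_order all_algebra.
From mathcomp Require Import ring lra zify.
Import Order.TTheory GRing.Theory Num.Theory.
Set Implicit Arguments. Unset Strict Implicit. Unset Printing Implicit Defensive.
Local Open Scope ring_scope.


Lemma card_induct (T : finType) (P : {set T} -> Prop) :
  P set0 -> (forall (d : T) (D : {set T}), d \notin D -> P D -> P (d |: D)) -> forall D, P D.
Proof.
move=> P0 PS D; move: {2}#|D| (erefl #|D|) => n; elim: n D => [|n IH] D hD.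
  by rewrite (cards0_eq hD).
have : (0 < #|D|)%N by rewrite hD.
rewrite card_gt0 => /set0Pn [d dD].
rewrite -(setD1K dD); apply: PS; first by rewrite !inE eqxx.
by apply: IH; move: hD; rewrite (cardsD1 d) dD add1n => -[].
Qed.

Lemma marg_dec (T : finType) (R : realFieldType) (v : {set T} -> R) :
  submodular v -> forall D A B : {set T}, A \subset B -> (forall x, x \in D -> x \notin B) ->
  v (B :|: D) - v B <= v (A :|: D) - v A.
Proof.
move=> sm D; elim/card_induct: D => [|d D dD IH] A B AB.
  by rewrite !setU0 !subrr.
move=> hD; have dB := hD d (setU11 _ _).
have DB : forall x, x \in D -> x \notin B by move=> x xD; apply: hD; rewrite !inE xD orbT.
have e : forall X, X :|: (d |: D) = d |: (X :|: D) by move=> X; rewrite setUCA.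
rewrite !e.
have h1 := IH A B AB DB.
have h2 : marg v d (B :|: D) <= marg v d (A :|: D).
  apply: sm; first by apply: setSU.
  by rewrite !inE negb_or dB.
move: h2; rewrite /marg => h2; lra.
Qed.

Lemma submod_lat (T : finType) (R : realFieldType) (v : {set T} -> R) :
  submodular v -> forall X Y, v (X :|: Y) + v (X :&: Y) <= v X + v Y.
Proof.
move=> sm X Y.
have := marg_dec sm (D := Y :\: X) (subsetIl X Y).
have -> : X :|: (Y :\: X) = X :|: Y.
  by apply/setP=> x; rewrite !inE; case: (x \in X); case: (x \in Y).
have -> : (X :&: Y) :|: (Y :\: X) = Y.
  by apply/setP=> x; rewrite !inE; case: (x \in X); case: (x \in Y).
move=> h.
have H : forall x, x \in Y :\: X -> x \notin X by move=> x; rewrite !inE => /andP[].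
have := h H; lra.
Qed.

Lemma marg_sum (T : finType) (R : realFieldType) (v : {set T} -> R) :
  submodular v -> forall D X : {set T}, (forall x, x \in D -> x \notin X) ->
  v (X :|: D) <= v X + \sum_(y in D) marg v y X.
Proof.
move=> sm D; elim/card_induct: D => [|d D dD IH] X hD.
  by rewrite setU0 big_set0 addr0.
have dX := hD d (setU11 _ _).
have DX : forall x, x \in D -> x \notin X by move=> x xD; apply: hD; rewrite !inE xD orbT.
rewrite big_setU1 //= setUCA.
have h1 := IH X DX.
have h2 : marg v d (X :|: D) <= marg v d X.
  apply: sm; first by apply: subsetUl.
  by rewrite !inE negb_or dX.
move: h2; rewrite /marg => h2; lra.
Qed.

Lemma subadd (T : finType) (R : realFieldType) (v : {set T} -> R) :
  submodular v -> (forall S, 0 <= v S) -> forall X Y, v (X :|: Y) <= v X + v Y.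
Proof. move=> sm nn X Y; have := submod_lat sm X Y; have := nn (X :&: Y); lra. Qed.

Definition round_ok (T : finType) (R : realFieldType) (v : {set T} -> R)
  (c : T -> R) (B rho : R) (rej S1 S2 Z : {set T}) :=
 [/\ S1 :&: S2 = set0, rej :&: (S1 :|: S2) = set0,
  (forall u, u \in rej -> marg v u S1 <= c u * rho / B /\ marg v u S2 <= c u * rho / B),
  \sum_(w in Z :&: S2) marg v w S1 <= v S2 & \sum_(w in Z :&: S1) marg v w S2 <= v S1].

Lemma half_bound (T : finType) (R : realFieldType) (v : {set T} -> R)
  (c : T -> R) (B rho : R) (rej S1 S2 Q : {set T}) :
  submodular v -> S1 :&: S2 = set0 -> rej :&: (S1 :|: S2) = set0 ->
  (forall u, u \in rej -> marg v u S1 <= c u * rho / B) ->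
  \sum_(w in Q :&: S2) marg v w S1 <= v S2 ->
  Q \subset rej :|: S1 :|: S2 ->
  v (Q :|: S1) <= v S1 + v S2 + cost c (Q :&: rej) * rho / B.
Proof.
move=> sm e12 er hr hx hQ.
have in12 : forall x, x \in S1 -> x \in S2 -> False.
  move=> x h1 h2; have : x \in S1 :&: S2 by rewrite inE h1 h2.
  by rewrite e12 inE.
have inr : forall x, x \in rej -> x \in S1 :|: S2 -> False.
  move=> x h1 h2; have : x \in rej :&: (S1 :|: S2) by rewrite inE h1 h2.
  by rewrite er inE.
have -> : Q :|: S1 = S1 :|: (Q :\: S1) by apply/setP=> x; rewrite !inE; case: (x \in Q); case: (x \in S1).
have h := marg_sum sm (D := Q :\: S1) (X := S1).
have h' : forall x, x \in Q :\: S1 -> x \notin S1 by move=> x; rewrite inE => /andP[].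
apply: le_trans (h h') _.
rewrite -addrA lerD2l (bigID (fun y => y \in rej)) /= addrC.
apply: lerD.
  rewrite (eq_bigl (fun y => y \in Q :&: S2)) //.
  move=> y; rewrite !inE.
  case yQ: (y \in Q) => //=.
  have := subsetP hQ y yQ; rewrite !inE.
  case yr: (y \in rej); case y1: (y \in S1); case y2: (y \in S2) => //=.
  all: try (exfalso; apply: (in12 y); by rewrite ?y1 ?y2).
  all: try (exfalso; apply: (inr y); by rewrite ?inE ?yr ?y1 ?y2 ?orbT).
  by rewrite andbF andFb.
rewrite (eq_bigl (fun y => y \in Q :&: rej)); last first.
  move=> y; rewrite !inE.
  case yQ: (y \in Q) => //=.
  case yr: (y \in rej); case y1: (y \in S1) => //=.
  all: try (exfalso; apply: (inr y); by rewrite ?inE ?yr ?y1 ?orbT).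
  by rewrite andbF.
rewrite /cost !mulr_suml.
apply: ler_sum => y; rewrite inE => /andP[_ yr].
exact: hr.
Qed.

Lemma round_bound (T : finType) (R : realFieldType) (v : {set T} -> R)
  (c : T -> R) (B rho : R) (rej S1 S2 Q : {set T}) :
  submodular v -> (forall S, 0 <= v S) ->
  round_ok v c B rho rej S1 S2 Q -> Q \subset rej :|: S1 :|: S2 ->
  v Q <= 2 * (v S1 + v S2) + 2 * (cost c (Q :&: rej) * rho / B).
Proof.
move=> sm nn [e12 er hr hx1 hx2] hQ.
have h1 := half_bound sm e12 er (fun u ur => (hr u ur).1) hx1 hQ.
have e21 : S2 :&: S1 = set0 by rewrite setIC.
have er' : rej :&: (S2 :|: S1) = set0 by rewrite setUC.
have hQ' : Q \subset rej :|: S2 :|: S1 by rewrite -setUA (setUC S2) setUA.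
have h2 := half_bound sm e21 er' (fun u ur => (hr u ur).2) hx2 hQ'.
have h := submod_lat sm (Q :|: S1) (Q :|: S2).
rewrite (_ : (Q :|: S1) :&: (Q :|: S2) = Q) in h; last first.
  apply/setP=> x; rewrite !inE.
  case xQ: (x \in Q) => //=.
  case x1: (x \in S1); case x2: (x \in S2) => //=.
  have : x \in S1 :&: S2 by rewrite inE x1 x2.
  by rewrite e12 inE.
have := nn ((Q :|: S1) :|: (Q :|: S2)).
lra.
Qed.


Definition binv (T : finType) (R : realFieldType) (v : {set T} -> R)
  (c : T -> R) (B rho : R) (Z R0 Rc : {set T}) (pc : T -> R) (S1 S2 : {set T}) :=
 [/\ S1 :&: S2 = set0, S1 :|: S2 \subset Rc, Rc \subset R0 &
     (forall u, u \in R0 :\: Rc -> marg v u S1 < c u * rho / B /\ marg v u S2 < c u * rho / B)] /\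
 [/\ \sum_(w in Z :&: S2) marg v w S1 <= v S2,
     \sum_(w in Z :&: S1) marg v w S2 <= v S1 &
     (forall u, u \in Rc -> c u <= pc u)].

Lemma inv_sym (T : finType) (R : realFieldType) (v : {set T} -> R)
  (c : T -> R) (B rho : R) (Z R0 Rc : {set T}) (pc : T -> R) (S1 S2 : {set T}) :
  binv v c B rho Z R0 Rc pc S1 S2 -> binv v c B rho Z R0 Rc pc S2 S1.
Proof.
case=> [[e s r h] [x1 x2 p]]; split; split => //.
- by rewrite setIC.
- by rewrite setUC.
- by move=> u /h [].
Qed.

Lemma inv_price (T : finType) (R : realFieldType) (v : {set T} -> R)
  (c : T -> R) (B rho : R) (Z R0 Rc : {set T}) (pc pc' : T -> R) (S1 S2 : {set T}) :
  binv v c B rho Z R0 Rc pc S1 S2 -> (forall w, w \in Rc -> c w <= pc' w) ->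
  binv v c B rho Z R0 Rc pc' S1 S2.
Proof. by case=> [h [x1 x2 p]] hp; split. Qed.

Lemma sum_split1 (T : finType) (R : realFieldType) (f : T -> R) (Z S : {set T}) u :
  u \notin S ->
  \sum_(w in Z :&: (u |: S)) f w = (if u \in Z then f u else 0) + \sum_(w in Z :&: S) f w.
Proof.
move=> uS; case uZ: (u \in Z).
  have -> : Z :&: (u |: S) = u |: (Z :&: S).
    apply/setP=> x; rewrite !inE; case: eqP => [->|]; by rewrite ?uZ.
  by rewrite big_setU1 // inE (negbTE uS) andbF.
rewrite add0r; apply: eq_bigl => x; rewrite !inE; case: eqP => [->|]; by rewrite ?uZ.
Qed.

Lemma inv_add1 (T : finType) (R : realFieldType) (v : {set T} -> R)
  (c : T -> R) (B rho : R) (Z R0 Rc : {set T}) (pc pc' : T -> R) (S1 S2 : {set T}) u :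
  submodular v ->
  binv v c B rho Z R0 Rc pc S1 S2 -> u \in Rc -> u \notin S1 :|: S2 ->
  marg v u S2 <= marg v u S1 -> 0 <= marg v u S1 ->
  (forall w, w \in Rc -> c w <= pc' w) ->
  binv v c B rho Z R0 Rc pc' (u |: S1) S2.
Proof.
move=> sm [[e12 s12 sR hr] [x2 x1 _]] uR uS hm hm0 hp.
move: uS; rewrite inE negb_or => /andP[uS1 uS2].
have notin : forall w, w \notin S1 -> w != u -> w \notin u |: S1.
  by move=> w h1 h2; rewrite !inE negb_or h1 h2.
have mon : forall w, w \notin S1 -> w != u -> marg v w (u |: S1) <= marg v w S1.
  by move=> w h1 h2; apply: sm; [apply: subsetUr | apply: notin].
have in12 : forall x, x \in S1 -> x \in S2 -> False.
  move=> x a b; have : x \in S1 :&: S2 by rewrite inE a b.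
  by rewrite e12 inE.
split; split => //.
- apply/setP=> x; rewrite !inE; case: eqP => [->|_]; first by rewrite (negbTE uS2).
  case x1': (x \in S1); case x2': (x \in S2) => //; by case: (in12 x).
- apply/subsetP=> x; rewrite !inE => /orP[/orP[/eqP->|h]|h] //;
  by apply: (subsetP s12); rewrite inE h ?orbT.
- move=> w wR; have [h1 h2] := hr w wR.
  move: wR; rewrite inE => /andP[wR _].
  have wS1 : w \notin S1 by apply/negP=> h; move/negP: wR; apply; apply: (subsetP s12); rewrite inE h.
  have wu : w != u by apply/eqP=> ew; move/negP: wR; rewrite ew.
  split => //; exact: le_lt_trans (mon w wS1 wu) h1.
- apply: le_trans x2; apply: ler_sum => w; rewrite inE => /andP[_ wS2].
  apply: mon.
    by apply/negP=> h; case: (in12 w).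
  by apply/eqP=> ew; move: uS2; rewrite -ew wS2.
- rewrite sum_split1 //.
  have -> : v (u |: S1) = marg v u S1 + v S1 by rewrite /marg; ring.
  apply: lerD => //; case: (u \in Z) => //; exact: hm.
Qed.

Lemma inv_rej (T : finType) (R : realFieldType) (v : {set T} -> R)
  (c : T -> R) (B rho : R) (Z R0 Rc : {set T}) (pc pc' : T -> R) (S1 S2 : {set T}) u :
  binv v c B rho Z R0 Rc pc S1 S2 -> u \in Rc -> u \notin S1 :|: S2 ->
  marg v u S1 < c u * rho / B -> marg v u S2 < c u * rho / B ->
  (forall w, w \in Rc :\ u -> c w <= pc' w) ->
  binv v c B rho Z R0 (Rc :\ u) pc' S1 S2.
Proof.
move=> [[e12 s12 sR hr] [x2 x1 _]] uR uS h1 h2 hp.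
split; split => //.
- apply/subsetP=> x xS; rewrite !inE (subsetP s12 x xS) andbT.
  by apply/eqP=> ex; move: uS; rewrite -ex xS.
- by apply: subset_trans sR; apply: subsetDl.
- move=> w; rewrite !inE negb_and negbK => /andP[/orP[/eqP->|wR] w0] //.
  by apply: hr; rewrite inE wR w0.
Qed.

Lemma proc_inv (T : finType) (R : realFieldType) (v : {set T} -> R)
  (c : T -> R) (B rho : R) (sel : nat -> T -> {set T} -> {set T} -> bool) (t : nat)
  (Z R0 : {set T}) :
  submodular v -> (forall u, 0 <= c u) -> 0 < B -> 0 < rho -> argmax_selector v sel ->
  forall l Rc pc S1 S2, binv v c B rho Z R0 Rc pc S1 S2 -> uniq l ->
  (forall u, u \in l -> (u \in Rc) && (u \notin S1 :|: S2)) ->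
  forall Rc' pc' S1' S2', proc v c B sel t rho l (Rc, pc, S1, S2) = (Rc', pc', S1', S2') ->
  binv v c B rho Z R0 Rc' pc' S1' S2'.
Proof.
move=> sm c0 B0 r0 hsel.
elim=> [|u l IH] Rc pc S1 S2 I hu hl Rc' pc' S1' S2' /=.
  by case=> <- <- <- <-.
move: hu => /= /andP[ul ulq].
have /andP[uR uS] := hl u (mem_head _ _).
have hl' : forall w, w \in l -> [&& w \in Rc, w \notin S1 :|: S2 & w != u].
  move=> w wl; have /andP[-> ->] := hl w (mem_behead (s := u :: l) wl).
  by apply/eqP=> ew; move: ul; rewrite -ew wl.
have pu : c u <= pc u by case: I => _ [_ _ hp]; apply: hp.
have hpc : forall w, w \in Rc -> c w <= pc w by case: I => _ [_ _ hp].
have rB : 0 < rho / B by rewrite divr_gt0.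
have hacc : forall m, c u <= Num.min (pc u) (m / (rho / B)) -> 0 <= m.
  move=> m; rewrite le_min => /andP[_ h]; have h0 := le_trans (c0 u) h.
  by rewrite ler_pdivlMr // mul0r in h0.
have hrejm : forall m, (c u <= Num.min (pc u) (m / (rho / B))) = false -> m < c u * rho / B.
  move=> m /negbT; rewrite -ltNge gt_min => /orP[h|h].
    by rewrite ltNge pu in h.
  by rewrite ltr_pdivrMr // mulrA in h.
have hs := hsel t u S1 S2.
case js: (sel t u S1 S2) in hs * => /=.
  case: ifP => [acc|rej].
    have m0 := hacc _ acc.
    set q := Num.min _ _ in acc *.
    have hp' : forall w, w \in Rc -> c w <= (if w == u then q else pc w).
      by move=> w wR; case: eqP => [->|_] //; apply: hpc.
    case: ifP => _.
      by case=> <- <- <- <-; apply: inv_price I hp'.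
    apply: IH => //; first exact: inv_add1 sm I uR uS hs m0 hp'.
    move=> w wl; have /and3P[-> wS wu] := hl' w wl.
    by move: wS; rewrite !inE !negb_or wu => /andP[-> ->].
  have h1 := hrejm _ rej.
  set q := Num.min _ _ in rej *.
  apply: IH => //.
    apply: (inv_rej I uR uS h1 _ _); first exact: le_lt_trans hs h1.
    by move=> w; rewrite !inE => /andP[/negbTE wu wR]; rewrite wu; apply: hpc.
  move=> w wl; have /and3P[wR wS wu] := hl' w wl.
  by rewrite in_setD1 wu wR wS.
have uS' : u \notin S2 :|: S1 by rewrite setUC.
case: ifP => [acc|rej].
  have m0 := hacc _ acc.
  set q := Num.min _ _ in acc *.
  have hp' : forall w, w \in Rc -> c w <= (if w == u then q else pc w).
    by move=> w wR; case: eqP => [->|_] //; apply: hpc.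
  case: ifP => _.
    by case=> <- <- <- <-; apply: inv_price I hp'.
  apply: IH => //; first exact: inv_sym (inv_add1 sm (inv_sym I) uR uS' hs m0 hp').
  move=> w wl; have /and3P[-> wS wu] := hl' w wl.
  by move: wS; rewrite !inE !negb_or wu => /andP[-> ->].
have h2 := hrejm _ rej.
set q := Num.min _ _ in rej *.
apply: IH => //.
  apply: (inv_rej I uR uS _ h2 _); first exact: le_lt_trans hs h2.
  by move=> w; rewrite !inE => /andP[/negbTE wu wR]; rewrite wu; apply: hpc.
move=> w wl; have /and3P[wR wS wu] := hl' w wl.
by rewrite in_setD1 wu wR wS.
Qed.


Lemma cover_bound (T : finType) (R : realFieldType) (v : {set T} -> R)
  (A : nat -> {set T}) (F : nat -> R) :
  submodular v -> (forall S, 0 <= v S) -> v set0 = 0 ->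
  forall (s : seq nat) (O : {set T}), (forall u, u \in O -> exists t, t \in s /\ u \in A t) ->
  (forall t (Q : {set T}), t \in s -> Q \subset O :&: A t -> v Q <= F t) ->
  v O <= \sum_(t <- s) F t.
Proof.
move=> sm nn v0; elim=> [|t s IH] O hc hb.
  have -> : O = set0.
    by apply/setP=> u; rewrite inE; apply/negP=> /hc [t []]; rewrite in_nil.
  by rewrite v0 big_nil.
rewrite big_cons.
have -> : O = (O :&: A t) :|: (O :\: A t).
  by apply/setP=> x; rewrite !inE; case: (x \in O); case: (x \in A t).
apply: le_trans (subadd sm nn _ _) _.
apply: lerD; first by apply: hb; rewrite ?mem_head.
apply: IH.
  move=> u; rewrite inE => /andP[uA uO].
  have [t' [ts ut]] := hc u uO; exists t'; split => //.
  move: ts; rewrite in_cons => /orP[/eqP et|] //.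
  by move: uA; rewrite -et ut.
move=> t' Q ts hQ; apply: hb; first by rewrite in_cons ts orbT.
apply: subset_trans hQ _; apply/subsetP=> x; rewrite !inE.
by case: (x \in O); case: (x \in A t).
Qed.

Lemma cost_split (T : finType) (R : realFieldType) (c : T -> R) (X Y : {set T}) :
  cost c X = cost c (X :&: Y) + cost c (X :\: Y).
Proof.
rewrite /cost (bigID (fun y => y \in Y)) /=; congr (_ + _); apply: eq_bigl => x;
by rewrite !inE; case: (x \in X); case: (x \in Y).
Qed.

Lemma cost_ge0 (T : finType) (R : realFieldType) (c : T -> R) (X : {set T}) :
  (forall u, 0 <= c u) -> 0 <= cost c X.
Proof. by move=> c0; apply: sumr_ge0. Qed.

Lemma cost_mono (T : finType) (R : realFieldType) (c : T -> R) (X Y : {set T}) :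
  (forall u, 0 <= c u) -> X \subset Y -> cost c X <= cost c Y.
Proof.
move=> c0 XY; rewrite (cost_split c Y X).
have -> : Y :&: X = X by apply/setIidPr.
have := cost_ge0 (Y :\: X) c0; lra.
Qed.

Lemma cost_elem (T : finType) (R : realFieldType) (c : T -> R) (X : {set T}) u :
  (forall u, 0 <= c u) -> u \in X -> c u <= cost c X.
Proof.
move=> c0 uX; rewrite /cost (bigD1 u) //= lerDl; apply: sumr_ge0 => i _; exact: c0.
Qed.

Unset Implicit Arguments.

Theorem lemma5p1 (T : finType) (R : realFieldType) (v : {set T} -> R)
  (c : T -> R) (B alpha : R) (ord : seq T)
  (sel : nat -> T -> {set T} -> {set T} -> bool) (u0 : T) (M : nat)
  (Rs : nat -> {set T}) (ps : nat -> T -> R) (S1 S2 : nat -> {set T})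
  (rho : nat -> R) (O : {set T}) :
  v set0 = 0 ->
  (forall S, 0 <= v S) ->
  submodular v ->
  (forall u, 0 <= c u) ->
  0 < B -> 1 < alpha ->
  uniq ord -> (forall u, u \in ord) ->
  argmax_selector v sel ->
  bfm_run v c B alpha ord sel u0 M Rs ps S1 S2 rho ->
  cost c O <= B ->
  (forall S, cost c S <= B -> v S <= v O) ->
  v O <= 2 * rho M + 2 * \sum_(1 <= t < M.+1) (v (S1 t) + v (S2 t)).
Proof.
move=> v0 nn sm c0 B0 a1 uord allord hsel run cO _.
case: run => [[R1 p1 u0R u0max] [[r1 S11 S21] [M2 hrho hstep hnot hend]]].
have M1 : (1 <= M)%N by apply: leq_trans M2.
have rho_ge0 : forall t, (1 <= t <= M)%N -> 0 <= rho t.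
  elim=> [|[|t] IH] // hM; first by rewrite r1.
  rewrite hrho /=; last by lia.
  apply: mulr_ge0; first lra.
  by apply: IH; lia.
have rho_le : forall n t, (1 <= t)%N -> (t + n <= M)%N -> rho t <= rho (t + n)%N.
  elim=> [|n IH] t t1 tn; first by rewrite addn0 ?lexx.
  apply: le_trans (IH t t1 _) _; first by lia.
  rewrite addnS (hrho (t + n).+1) /=; last by lia.
  apply: ler_peMl; last lra.
  by apply: rho_ge0; lia.
have rho_leM : forall t, (1 <= t <= M)%N -> rho t <= rho M.
  move=> t /andP[t1 tM]; have := rho_le (M - t)%N t t1; rewrite subnKC //; apply.
  by lia.
have rM0 : 0 <= rho M by apply: rho_ge0; rewrite M1 leqnn.
have sum0 : 0 <= \sum_(1 <= t < M.+1) (v (S1 t) + v (S2 t)).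
  by apply: sumr_ge0 => t _; apply: addr_ge0.
have OR1 : O \subset Rs 1.
  apply/subsetP=> u uO; rewrite R1 inE.
  exact: le_trans (cost_elem c0 uO) cO.
have [r10|r1pos] := eqVneq (rho 1%N) 0.
  (* degenerate case: all singletons have value 0 *)
  have := marg_sum sm (D := O) (X := set0).
  rewrite set0U v0 add0r => h.
  have := h (fun x _ => negbT (in_set0 x)).
  have -> : \sum_(y in O) marg v y set0 = \sum_(y in O) v [set y].
    by apply: eq_bigr => y _; rewrite /marg setU0 v0 subr0.
  move=> hO; apply: le_trans hO _.
  apply: le_trans (_ : 0 <= _); last first.
    by apply: addr_ge0; apply: mulr_ge0.
  apply: sumr_le0 => y yO.
  by rewrite -r10 r1; apply: u0max; apply: (subsetP OR1).
have rpos : forall t, (1 <= t <= M)%N -> 0 < rho t.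
  elim=> [|[|t] IH] // hM.
    by rewrite lt_def r1pos /= r1 nn.
  rewrite hrho /=; last by lia.
  apply: mulr_gt0; first lra.
  by apply: IH; lia.
have round : forall t, (2 <= t <= M)%N ->
    (forall u, u \in Rs t.-1 -> c u <= ps t.-1 u) ->
    forall Z : {set T}, binv v c B (rho t) Z (Rs t.-1) (Rs t) (ps t) (S1 t) (S2 t).
  move=> t ht hp Z.
  have e := hstep t ht.
  have rt : 0 < rho t by apply: rpos; lia.
  apply: (proc_inv sm c0 B0 rt hsel _ _ _ (esym e)).
  - split; split.
    + by rewrite setI0.
    + by rewrite setU0 sub0set.
    + exact: subxx.
    + by move=> u; rewrite setDv inE.
    + by rewrite setI0 big_set0 v0.
    + by rewrite setI0 big_set0 v0.
    + exact: hp.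
  - exact: filter_uniq.
  - by move=> u; rewrite mem_filter !inE => /andP[/andP[_ ->] _].
have G : forall t, (1 <= t <= M)%N -> forall u, u \in Rs t -> c u <= ps t u.
  elim=> [|[|t] IH] // ht.
    by rewrite R1 p1 => u; rewrite inE.
  have h1 : (1 <= t.+1 <= M)%N by lia.
  have h2 : (2 <= t.+2 <= M)%N by lia.
  have [_ [_ _ hp]] := round t.+2 h2 (IH h1) set0.
  exact: hp.
have roundG : forall t, (2 <= t <= M)%N ->
    forall Z : {set T}, binv v c B (rho t) Z (Rs t.-1) (Rs t) (ps t) (S1 t) (S2 t).
  move=> t ht; apply: (round t ht); apply: G; case: t ht => [|[|t]] //= ht; lia.
have mono : forall t, (2 <= t <= M)%N -> Rs t \subset Rs t.-1.
  by move=> t ht; have [[_ _ h _] _] := roundG t ht set0.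
pose rej := fun t => if (2 <= t)%N then Rs t.-1 :\: Rs t else set0.
have rok : forall t, (1 <= t <= M)%N -> forall Z : {set T},
    round_ok v c B (rho t) (rej t) (S1 t) (S2 t) Z.
  case=> [|[|t]] // ht Z.
    rewrite /rej /= S11 S21; split.
    - by rewrite setI0.
    - by rewrite set0I.
    - by move=> u; rewrite inE.
    - by rewrite setI0 big_set0 v0.
    - rewrite -[[set u0]]setU0 sum_split1 ?inE // setI0 big_set0 addr0.
      case: (u0 \in Z) => //; rewrite /marg setU0 v0 subr0 //.
  have [[e12 s12 _ hr] [x2 x1 _]] := roundG t.+2 ht Z.
  rewrite /rej /=; split => //.
  - apply/setP=> x; rewrite !inE.
    case xR: (x \in Rs t.+2) => //=.
    case x12: (x \in S1 t.+2 :|: S2 t.+2); last by move: x12; rewrite inE => ->; rewrite andbF.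
    by move: xR; rewrite (subsetP s12 x x12).
  - by move=> u /hr [h1 h2]; split; apply: ltW.
pose A := fun t => rej t :|: S1 t :|: S2 t.
pose F := fun t => 2 * (v (S1 t) + v (S2 t)) + 2 * (cost c (O :&: rej t) * rho M / B).
have uR1 : forall u, u \in O -> u \in Rs 1 by move=> u; apply: (subsetP OR1).
have drop : forall u, u \in Rs 1 -> forall m, (1 <= m)%N -> u \notin Rs m ->
    exists2 t, (2 <= t <= m)%N & u \in Rs t.-1 :\: Rs t.
  move=> u u1; elim=> [|[|m] IH] // _ hm.
    by move: hm; rewrite u1.
  case: (boolP (u \in Rs m.+1)) => h.
    by exists m.+2 => //=; rewrite in_setD hm h.
  have [t ht ut] := IH isT h; exists t => //.
  by case/andP: ht => -> h3; apply: leqW.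
have iM1 : M.-1 \in index_iota 1 M.+1.
  rewrite mem_index_iota; apply/andP; split.
    by rewrite -ltnS prednK.
  by rewrite ltnS; apply: leq_pred.
have iM : M \in index_iota 1 M.+1 by rewrite mem_index_iota M1 ltnSn.
have cov : forall u, u \in O -> exists t, t \in index_iota 1 M.+1 /\ u \in A t.
  move=> u uO; have u1 := uR1 u uO.
  case: (boolP (u \in Rs M)) => uM.
    have := congr1 (fun X : {set T} => u \in X) hend; rewrite !inE uM andbT /=.
    move/negbFE; case/orP=> [/orP[/orP[h|h]|h]|h].
    - by exists M.-1; split => //; rewrite /A !inE h orbT.
    - by exists M.-1; split => //; rewrite /A !inE h orbT.
    - by exists M; split => //; rewrite /A !inE h orbT.
    - by exists M; split => //; rewrite /A !inE h orbT.
  have [t ht ut] := drop u u1 M M1 uM.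
  case/andP: ht => h2 h3.
  exists t; split; first by rewrite mem_index_iota (ltnW h2) ltnS h3.
  rewrite /A /rej h2.
  by rewrite !inE; rewrite !inE in ut; rewrite ut.
have bnd : forall t (Q : {set T}), t \in index_iota 1 M.+1 -> Q \subset O :&: A t -> v Q <= F t.
  move=> t Q; rewrite mem_index_iota => ht hQ.
  have hQA : Q \subset rej t :|: S1 t :|: S2 t.
    by apply: subset_trans hQ _; apply: subsetIr.
  have hQO : Q \subset O by apply: subset_trans hQ _; apply: subsetIl.
  apply: le_trans (round_bound sm nn (rok t ht Q) hQA) _.
  rewrite /F lerD2l ler_pM2l //; apply: ler_wpM2r; first by rewrite invr_ge0 ltW.
  apply: ler_pM.
  - exact: cost_ge0.
  - by apply: rho_ge0.
  - apply: cost_mono => //; apply/subsetP=> x; rewrite !inE => /andP[xQ ->].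
    by rewrite (subsetP hQO x xQ).
  - exact: rho_leM.
have main := cover_bound (A := A) (F := F) sm nn v0 cov bnd.
apply: le_trans main _.
have tel : forall m, (1 <= m <= M)%N ->
    \sum_(1 <= t < m.+1) cost c (O :&: rej t) + cost c (O :&: Rs m) = cost c O.
  elim=> [|[|m] IH] // hm.
    rewrite big_nat1 /rej /= setI0 /cost big_set0 add0r.
    by rewrite (setIidPl OR1).
  have h1 : (1 <= m.+1 <= M)%N by lia.
  have h2 : (2 <= m.+2 <= M)%N by lia.
  rewrite big_nat_recr //= -(IH h1) -addrA; congr (_ + _).
  rewrite (cost_split c (O :&: Rs m.+1) (Rs m.+2)) addrC; congr (_ + _).
    apply: congr1; apply/setP=> x; rewrite !inE.
    case x2: (x \in Rs m.+2); last by rewrite !andbF.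
    by rewrite (subsetP (mono _ h2) x x2) !andbT.
  rewrite /rej /=; apply: congr1; apply/setP=> x; rewrite !inE.
  by case: (x \in O); case: (x \in Rs m.+1); case: (x \in Rs m.+2).
have hsum : \sum_(1 <= t < M.+1) cost c (O :&: rej t) <= B.
  apply: le_trans cO; rewrite -(tel M); last by rewrite M1 leqnn.
  by rewrite lerDl; apply: cost_ge0.
rewrite /F big_split /= -!mulr_sumr -!mulr_suml.
have : (\sum_(1 <= i < M.+1) cost c (O :&: rej i)) * rho M / B <= rho M.
  rewrite ler_pdivrMr // mulrC; apply: ler_wpM2l => //.
lra.
Qed.
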